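(* Let $R$ be a commutative ring and let $(A,d)$ be an acyclic differential graded $R$-algebra. Let $\bar I\subseteq\bar J$ be graded ideals of the graded algebra $\ker(d)$. If $\bar I\neq\bar J$, then $A\cdot\bar I\neq A\cdot\bar J$.
   Context: A differential graded (dg) $R$-algebra $(A,d)$ is a $\mathbb{Z}$-graded $R$-algebra $A$ with an $R$-linear endomorphism $d$, homogeneous of degree $1$, with $d^2=0$ and $d(ab)=d(a)b+(-1)^{|a|}a\,d(b)$ for homogeneous $a,b$. It is acyclic if its homology vanishes, i.e. $\ker(d)=\operatorname{im}(d)$. The set $\ker(d)$ is a graded subalgebra of $A$; $A\cdot\bar I$ denotes the left ideal of $A$ generated by $\bar I$. *)

(* Defs.v *)
From HB Require Import structures.
From mathcomp Require Import all_boot all_order all_algebra.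
Set Implicit Arguments. Unset Strict Implicit. Unset Printing Implicit Defensive.
Import GRing.Theory Num.Theory.
Local Open Scope ring_scope.

Section DG.
Variables (R : comNzRingType) (A : algType R).

(* A Z-grading of A: G n is the set of homogeneous elements of degree n.
   Each G n is an R-submodule, 1 has degree 0, G m * G n <= G (m+n),
   and A is the internal direct sum of the G n. *)
Definition is_grading (G : int -> A -> Prop) : Prop :=
  [/\ (forall n, G n 0),
      (forall n (r : R) x y, G n x -> G n y -> G n (r *: x + y)) /\ G 0 1,
      (forall m n x y, G m x -> G n y -> G (m + n) (x * y)),
      (forall x, exists (s : seq int) (f : int -> A),
          [/\ uniq s, (forall n, G n (f n)) & x = \sum_(n <- s) f n])
    & (forall (s : seq int) (f : int -> A), uniq s -> (forall n, G n (f n)) ->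
          \sum_(n <- s) f n = 0 -> forall n, n \in s -> f n = 0)].

Definition is_dga (G : int -> A -> Prop) (d : {linear A -> A}) : Prop :=
  [/\ is_grading G,
      (forall n x, G n x -> G (n + 1) (d x)),
      (forall x, d (d x) = 0)
    & (forall n a b, G n a -> d (a * b) = d a * b + (-1) ^+ `|n|%N * (a * d b))].

Definition acyclic (d : A -> A) : Prop :=
  forall x, d x = 0 -> exists y, x = d y.

Definition graded_ideal_of_ker (G : int -> A -> Prop) (d : A -> A)
    (I : A -> Prop) : Prop :=
  [/\ (forall x, I x -> d x = 0),
      I 0,
      (forall x y, I x -> I y -> I (x - y)),
      (forall a x, d a = 0 -> I x -> I (a * x) /\ I (x * a))
    & (forall x (s : seq int) (f : int -> A), I x -> uniq s ->
         (forall n, G n (f n)) -> x = \sum_(n <- s) f n ->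
         forall n, n \in s -> I (f n))].

Definition left_ideal_gen (I : A -> Prop) : A -> Prop :=
  fun y => exists (k : nat) (a x : 'I_k -> A),
    (forall i, I (x i)) /\ y = \sum_(i < k) a i * x i.

End DG.

(* Main.v *)
Require Import Defs.
From HB Require Import structures.
From mathcomp Require Import all_boot all_order all_algebra.
From Stdlib Require Import Classical.
Import GRing.Theory.
Local Open Scope ring_scope.

Lemma dmul_ker (R : comNzRingType) (A : algType R)
  (G : int -> A -> Prop) (d : {linear A -> A})
  (Hdga : is_dga G d) (y : A) (Hy : d y = 0) (a : A) : d (a * y) = d a * y.
Proof.
case: Hdga => [[_ _ _ Hdec _] _ _ Hleib].
have [s [f [_ Hf ->]]] := Hdec a.
rewrite mulr_suml !raddf_sum mulr_suml; apply: eq_bigr => n _ /=.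
by rewrite (Hleib n) // Hy mulr0 mulr0 addr0.
Qed.

Arguments dmul_ker {R A G d} Hdga {y} Hy a.

Theorem lemma2p6 (R : comNzRingType) (A : algType R)
  (G : int -> A -> Prop) (d : {linear A -> A})
  (Hdga : is_dga G d) (Hacyc : acyclic d)
  (I J : A -> Prop)
  (HI : graded_ideal_of_ker G d I) (HJ : graded_ideal_of_ker G d J)
  (HIJ : forall x, I x -> J x)
  (HneqIJ : ~ (forall x, I x <-> J x)) :
  ~ (forall y, left_ideal_gen I y <-> left_ideal_gen J y).
Proof.
move=> Heq.
have [x [Jx nIx]] : exists x, J x /\ ~ I x.
  apply: NNPP => H; apply: HneqIJ => x; split; first exact: HIJ.
  by move=> Jx; apply: NNPP => nIx; apply: H; exists x.
have : left_ideal_gen I x.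
  apply/Heq; exists 1%N, (fun _ => 1), (fun _ => x); split=> //.
  by rewrite big_ord1 mul1r.
case=> k [a [y [Iy Ex]]].
case: (HJ) => HJd _ _ _ _.
have dx : d x = 0 by apply: HJd.
case: (HI) => HId I0 Isub Imul _.
have d1 : d 1 = 0.
  case: Hdga => [[_ [_ G01] _ _ _] _ _ Hleib].
  have := Hleib 0 1 1 G01; rewrite !mulr1 expr0 !mul1r.
  move=> H; have : d 1 + d 1 - d 1 = d 1 - d 1 by rewrite -H.
  by rewrite addrK subrr.
have [h Hh] := Hacyc 1 d1.
have Ex2 : x = d (h * x) by rewrite (dmul_ker Hdga dx) -Hh mul1r.
apply: nIx; rewrite Ex2 Ex mulr_sumr raddf_sum.
have Iadd : forall u v, I u -> I v -> I (u + v).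
  move=> u v Iu Iv; have := Isub u (0 - v) Iu (Isub 0 v I0 Iv).
  by rewrite sub0r opprK.
apply: (big_ind I) => // i _.
rewrite /= mulrA (dmul_ker Hdga (HId _ (Iy i))).
have [] := Imul (d (h * a i)) (y i) _ (Iy i) => //.
by case: Hdga.
Qed.
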